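(* Let $\theta:\mathbb{A}\to\mathbb{A}^\lambda$ be a primitive substitution satisfying the standing assumptions with $c(\theta)=1$, and let $u=\theta(u)$ be its fixed point. Then $u$ is Weyl rationally almost periodic, and the approximating periodic sequences can be chosen with period $\lambda^k$: for every $\varepsilon>0$ there exist $k\ge1$ and a $\lambda^k$-periodic $w\in\mathbb{A}^{\mathbb{N}}$ with $d_W(u,w)<\varepsilon$.
   Context: Substitution $\theta:\mathbb{A}\to\mathbb{A}^\lambda$, $\lambda\ge2$, with iterates $\theta^k$; primitive: some $\theta^k(a)$ contains all letters for every $a$. Standing assumptions: $\theta(a_0)_0=a_0$, $\theta$ injective on letters, subshift infinite; $u$ the fixed point with $u[0]=a_0$. Column number $c(\theta)=\min_{k\ge1,0\le j<\lambda^k}|\{\theta^k(a)_j:a\in\mathbb{A}\}|$. Weyl pseudo-metric: $d_W(x,y)=\limsup_{N\to\infty}\sup_{\ell\ge0}\frac1N|\{\ell\le n<\ell+N:x[n]\ne y[n]\}|$; $x$ is Weyl rationally almost periodic if it is a $d_W$-limit of periodic sequences over the same alphabet. *)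

(* Defs.v *)
From Stdlib Require Import Reals.
From mathcomp Require Import all_boot.
Set Implicit Arguments. Unset Strict Implicit. Unset Printing Implicit Defensive.

Section Subst.
Variables (A : finType) (lambda : nat).

Definition subst_word (theta : A -> lambda.-tuple A) (w : seq A) : seq A :=
  flatten (map (fun a => val (theta a)) w).

Definition subst_iter (theta : A -> lambda.-tuple A) (k : nat) (a : A) : seq A :=
  iter k (subst_word theta) [:: a].

Definition primitive_subst (theta : A -> lambda.-tuple A) : Prop :=
  exists k, 0 < k /\ forall a b : A, b \in subst_iter theta k a.

Definition in_language (theta : A -> lambda.-tuple A) (w : seq A) : Prop :=
  exists k a, infix w (subst_iter theta k a).

Definition in_subshift (theta : A -> lambda.-tuple A) (x : nat -> A) : Prop :=
  forall i n, in_language theta (mkseq (fun m => x (i + m)) n).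

Definition subshift_infinite (theta : A -> lambda.-tuple A) : Prop :=
  ~ exists s : seq (nat -> A),
      forall x, in_subshift theta x -> exists i, i < size s /\ x = nth x s i.

Definition column_card (theta : A -> lambda.-tuple A) (a0 : A) (k j : nat) : nat :=
  #|[set nth a0 (subst_iter theta k a) j | a : A]|.

Definition is_column_number (theta : A -> lambda.-tuple A) (a0 : A) (c : nat) : Prop :=
  (exists k j, 0 < k /\ j < lambda ^ k /\ column_card theta a0 k j = c) /\
  (forall k j, 0 < k -> j < lambda ^ k -> c <= column_card theta a0 k j).

Definition is_fixed_point (theta : A -> lambda.-tuple A) (u : nat -> A) : Prop :=
  forall n (j : 'I_lambda), u (lambda * n + j) = tnth (theta (u n)) j.

Definition mismatches (x y : nat -> A) (l N : nat) : nat :=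
  count (fun n => x n != y n) (iota l N).

Definition periodic_with (w : nat -> A) (p : nat) : Prop :=
  forall n, w (n + p) = w n.

End Subst.

Open Scope R_scope.

Definition is_sup (S : R -> Prop) (s : R) : Prop := is_lub S s.
Definition is_inf (S : R -> Prop) (s : R) : Prop := is_lub (fun t => S (- t)) (- s).

Definition is_limsup (D : nat -> R) (d : R) : Prop :=
  exists T : nat -> R,
    (forall M, is_sup (fun t => exists N, (M <= N)%nat /\ t = D N) (T M)) /\
    is_inf (fun t => exists M, t = T M) d.

(* d = d_W(x,y) = limsup_N sup_l (1/N) #{l <= n < l+N : x n <> y n}
   (indexed by N.+1 to avoid N = 0, which does not affect the limsup) *)
Definition weyl_dist (A : finType) (x y : nat -> A) (d : R) : Prop :=
  exists D : nat -> R,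
    (forall N, is_sup (fun t => exists l,
                 t = INR (mismatches x y l N.+1) / INR N.+1) (D N)) /\
    is_limsup D d.

Definition weyl_lt (A : finType) (x y : nat -> A) (eps : R) : Prop :=
  exists d, weyl_dist x y d /\ d < eps.

Definition weyl_rap (A : finType) (x : nat -> A) : Prop :=
  forall eps, 0 < eps ->
    exists (p : nat) (w : nat -> A), (0 < p)%nat /\ periodic_with w p /\ weyl_lt x w eps.

(* Main.v *)
Require Import Defs.
From Stdlib Require Import Reals.
From mathcomp Require Import all_boot.
From Stdlib Require Import Lra.
From mathcomp Require Import zify.

Module M1.
Local Open Scope nat_scope.

Section S.
Variables (A : finType) (lambda : nat) (theta : A -> lambda.-tuple A) (a0 : A).

Lemma size_sw w : size (subst_word theta w) = lambda * size w.
Proof.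
elim: w => [|x w IH] /=; first by rewrite muln0.
by rewrite size_cat IH size_tuple mulnS.
Qed.

Lemma size_si k a : size (subst_iter theta k a) = lambda ^ k.
Proof.
elim: k => [|k IH] //=. rewrite /subst_iter /= size_sw -/(subst_iter theta k a) IH expnS //.
Qed.

Lemma nth_sw w i r : r < lambda -> i < size w ->
  nth a0 (subst_word theta w) (lambda * i + r) = nth a0 (val (theta (nth a0 w i))) r.
Proof.
move=> hr; elim: w i => [|x w IH] [|i] //= hi.
  by rewrite muln0 add0n nth_cat size_tuple hr.
rewrite nth_cat size_tuple mulnS -addnA.
rewrite ifF; last by apply/negbTE; rewrite -leqNgt leq_addr.
by rewrite addKn IH.
Qed.

Lemma fix_iter u : is_fixed_point theta u -> forall k m r, r < lambda ^ k ->
  u (lambda ^ k * m + r) = nth a0 (subst_iter theta k (u m)) r.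
Proof.
move=> hu; elim=> [|k IH] m r hr.
  by move: hr; rewrite expn0 ltnS leqn0 => /eqP ->; rewrite mul1n addn0.
have lp : 0 < lambda by case: lambda hr => //; rewrite exp0n.
have hq : r %/ lambda < lambda ^ k by rewrite ltn_divLR // -expnSr.
have -> : lambda ^ k.+1 * m + r = lambda * (lambda ^ k * m + r %/ lambda) + r %% lambda.
  by rewrite mulnDr mulnA -expnS -addnA (mulnC lambda) -divn_eq.
have hu' := hu (lambda ^ k * m + r %/ lambda) (Ordinal (ltn_pmod r lp)).
rewrite /= in hu'; rewrite hu' IH // (tnth_nth a0).
rewrite /subst_iter iterS -/(subst_iter theta k (u m)).
rewrite [in RHS](divn_eq r lambda) (mulnC _ lambda) nth_sw ?ltn_pmod ?size_si //.
Qed.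
End S.

End M1.
Import M1.

Module M2.
Local Open Scope nat_scope.

Section Per.
Variables (f : pred nat) (P : nat).
Hypothesis hP : 0 < P.
Hypothesis hf : forall n, f (n + P) = f n.

Lemma cnt_shift l : count f (iota l P) = count f (iota 0 P).
Proof.
elim: l => [|l IH] //; rewrite -IH.
case: P hP hf => // P' _ hf'.
have -> : iota l.+1 P'.+1 = iota l.+1 P' ++ [:: l + P'.+1].
  by rewrite -[P'.+1]addn1 iotaD /= addn1 addSn addnS.
rewrite count_cat /= hf' addn0 addnC //.
Qed.

Lemma cnt_mul l m : count f (iota l (P * m)) = m * count f (iota 0 P).
Proof.
elim: m l => [|m IH] l; first by rewrite muln0.
by rewrite mulnS iotaD count_cat cnt_shift IH mulSn.
Qed.

Lemma cnt_le l N : count f (iota l N) <= (N %/ P + 1) * count f (iota 0 P).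
Proof.
rewrite -(cnt_mul l) .
have hN : N <= P * (N %/ P + 1).
  rewrite mulnDr muln1 {1}(divn_eq N P) mulnC leq_add2l ltnW // ltn_pmod //.
rewrite -(subnKC hN) iotaD count_cat leq_addr //.
Qed.
End Per.

Section Dig.
Variables (A : eqType) (u : nat -> A) (Q j : nat) (F : A -> nat -> A) (b : A).
Hypothesis hQ : 0 < Q.
Hypothesis hj : j < Q.
Hypothesis hF : forall m r, r < Q -> u (Q * m + r) = F (u m) r.
Hypothesis hb : forall a, F a j = b.

Fixpoint bad K n := if K is K'.+1 then (n %% Q != j) && bad K' (n %/ Q) else true.

Lemma u_split n : u n = F (u (n %/ Q)) (n %% Q).
Proof. by rewrite -hF ?ltn_pmod // mulnC -divn_eq. Qed.

Lemma good_eq K n n' : ~~ bad K n -> n %% Q ^ K = n' %% Q ^ K -> u n = u n'.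
Proof.
elim: K n n' => [|K IH] n n' //=.
rewrite negb_and negbK => hn he.
have hm : n %% Q = n' %% Q.
  have hd : Q %| Q ^ K.+1 by rewrite expnS dvdn_mulr.
  by rewrite -(modn_dvdm n hd) he modn_dvdm.
case/orP: hn => [/eqP hn | hn].
  by rewrite u_split hn hb u_split -hm hn hb.
rewrite u_split (u_split n') -hm (IH (n %/ Q) (n' %/ Q)) //.
by rewrite !modn_divl -expnSr he.
Qed.

Lemma bad_mod K n : bad K (n %% Q ^ K) = bad K n.
Proof.
elim: K n => [|K IH] n //=.
rewrite expnSr modn_dvdm ?dvdn_mull // -modn_divl IH //.
Qed.

Lemma bad_per K n : bad K (n + Q ^ K) = bad K n.
Proof. by rewrite -bad_mod modnDr bad_mod. Qed.

Lemma cnt_blk K M : count (bad K.+1) (iota (Q * M) Q) = (if bad K M then Q - 1 else 0).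
Proof.
rewrite -[Q * M]addn0 iotaDl count_map.
rewrite (@eq_in_count _ _ (fun r => (r != j) && bad K M)); last first.
  move=> r; rewrite mem_iota add0n => hr /=.
  by rewrite mulnC modnMDl modn_small // divnMDl // divn_small // addn0.
case: (bad K M).
- have hc : count (pred1 j) (iota 0 Q) = 1.
    by rewrite count_uniq_mem ?iota_uniq // mem_iota add0n hj.
  have := count_predC (pred1 j) (iota 0 Q); rewrite size_iota hc.
  have -> : count (predC (pred1 j)) (iota 0 Q) = count (fun r => (r != j) && true) (iota 0 Q).
    by apply: eq_count => x /=; rewrite andbT.
  lia.
- by elim: (iota 0 Q) => //= x s ->; rewrite andbF.
Qed.

Lemma cnt_step K M :
  count (bad K.+1) (iota 0 (Q * M)) = (Q - 1) * count (bad K) (iota 0 M).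
Proof.
elim: M => [|M IH]; first by rewrite muln0 /= muln0.
rewrite mulnS addnC iotaD count_cat IH add0n -[M.+1]addn1 iotaD count_cat /= add0n addn0 cnt_blk.
case: (bad K M); lia.
Qed.

Lemma cnt_bad K : count (bad K) (iota 0 (Q ^ K)) = (Q - 1) ^ K.
Proof.
elim: K => [|K IH]; first by [].
by rewrite expnS cnt_step IH expnS.
Qed.
End Dig.

End M2.
Import M2.

Module M3.
Local Open Scope R_scope.

Lemma ratio_bnd (A : finType) (x y : nat -> A) l N :
  0 <= INR (mismatches x y l N.+1) / INR N.+1 <= 1.
Proof.
have hN : 0 < INR N.+1 by apply: lt_0_INR; apply/ltP.
have hm : (mismatches x y l N.+1 <= N.+1)%nat.
  by rewrite /mismatches -{2}(size_iota l N.+1) count_size.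
have hm' : INR (mismatches x y l N.+1) <= INR N.+1 by apply: le_INR; apply/leP.
split.
- apply: Rle_mult_inv_pos => //; apply: pos_INR.
- apply: (Rmult_le_reg_r (INR N.+1)) => //.
  rewrite /Rdiv Rmult_assoc Rinv_l; lra.
Qed.

Arguments ratio_bnd {A}.

Lemma weyl_bound (A : finType) (x y : nat -> A) (g eps : R) (M : nat) :
  (forall l N, (M <= N)%nat -> INR (mismatches x y l N.+1) / INR N.+1 <= g) ->
  g < eps -> weyl_lt x y eps.
Proof.
move=> hg hge.
pose E N := fun t => exists l, t = INR (mismatches x y l N.+1) / INR N.+1.
have bE N : bound (E N).
  by exists 1 => t [l ->]; case: (ratio_bnd x y l N).
have nE N : exists t, E N t by exists (INR (mismatches x y 0 N.+1) / INR N.+1), 0%nat.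
pose D N := proj1_sig (completeness (E N) (bE N) (nE N)).
have hD N : is_lub (E N) (D N) := proj2_sig (completeness (E N) (bE N) (nE N)).
have D01 N : 0 <= D N <= 1.
  split.
  - apply: Rle_trans (proj1 (hD N) _ (ex_intro _ 0%nat erefl)).
    exact: (proj1 (ratio_bnd x y 0 N)).
  - apply: (proj2 (hD N)) => t [l ->]; exact: (proj2 (ratio_bnd x y l N)).
pose G M' := fun t => exists N, (M' <= N)%nat /\ t = D N.
have bG M' : bound (G M') by exists 1 => t [N [_ ->]]; case: (D01 N).
have nG M' : exists t, G M' t by exists (D M'), M'.
pose T M' := proj1_sig (completeness (G M') (bG M') (nG M')).
have hT M' : is_lub (G M') (T M') := proj2_sig (completeness (G M') (bG M') (nG M')).
have T0 M' : 0 <= T M'.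
  apply: Rle_trans (proj1 (D01 M')) _; apply: (proj1 (hT M')); exists M'; split => //.
pose H := fun t => exists M', - t = T M'.
have bH : bound H by exists 0 => t [M' h]; have := T0 M'; lra.
have nH : exists t, H t by exists (- T 0%nat), 0%nat; rewrite Ropp_involutive.
pose m := proj1_sig (completeness H bH nH).
have hm : is_lub H m := proj2_sig (completeness H bH nH).
exists (- m); split.
  exists D; split; first by move=> N; exact: hD.
  exists T; split; first by move=> M'; exact: hT.
  by rewrite /is_inf Ropp_involutive.
have hTM : T M <= g.
  apply: (proj2 (hT M)) => t [N [hN ->]].
  apply: (proj2 (hD N)) => t' [l ->]; exact: hg.
have : - T M <= m by apply: (proj1 hm); exists M; rewrite Ropp_involutive.
lra.
Qed.

Lemma INR_expn a K : INR (a ^ K)%N = INR a ^ K.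
Proof. elim: K => [|K IH] //=; by rewrite expnS mult_INR IH. Qed.

Lemma ratio_le mm n P C : (0 < n)%N -> (0 < P)%N -> (mm <= (n %/ P + 1) * C)%N ->
  INR mm / INR n <= INR C / INR P + INR C / INR n.
Proof.
move=> hn hP hm.
have hn' : 0 < INR n by apply: lt_0_INR; apply/ltP.
have hP' : 0 < INR P by apply: lt_0_INR; apply/ltP.
have hq : INR (n %/ P) * INR P <= INR n.
  rewrite -mult_INR; apply: le_INR; apply/leP; exact: leq_divM.
have hm' : INR mm <= (INR (n %/ P) + 1) * INR C.
  rewrite -[1]/(INR 1) -plus_INR -mult_INR; apply: le_INR; apply/leP; exact: hm.
have hC : 0 <= INR C by apply: pos_INR.
have hq0 : 0 <= INR (n %/ P) by apply: pos_INR.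
replace (INR C / INR P + INR C / INR n) with
  (INR mm / INR n + (INR C * INR n + INR C * INR P - INR mm * INR P) / (INR n * INR P))
  by (field; lra).
have : 0 <= (INR C * INR n + INR C * INR P - INR mm * INR P) / (INR n * INR P).
  apply: Rle_mult_inv_pos; last by nra.
  nra.
lra.
Qed.

End M3.
Import M3.


Theorem mainTheorem8 (A : finType) (lambda : nat) (theta : A -> lambda.-tuple A)
  (a0 : A) (u : nat -> A) :
  (2 <= lambda)%nat ->
  primitive_subst theta ->
  nth a0 (val (theta a0)) 0 = a0 ->
  injective theta ->
  subshift_infinite theta ->
  is_column_number theta a0 1 ->
  u 0%nat = a0 ->
  is_fixed_point theta u ->
  weyl_rap u /\
  (forall eps : R, (0 < eps)%R ->
     exists (k : nat) (w : nat -> A),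
       (1 <= k)%nat /\ periodic_with w (lambda ^ k) /\ weyl_lt u w eps).
Proof.
Local Open Scope R_scope.
move=> hl _ _ _ _ [[k [j [hk [hj hc]]]] _] _ hu.
have /cards1P [b hb] : #|[set nth a0 (subst_iter theta k a) j | a : A]| == 1%N.
  by apply/eqP.
have hb' a : nth a0 (subst_iter theta k a) j = b.
  have : nth a0 (subst_iter theta k a) j \in [set nth a0 (subst_iter theta k a) j | a : A].
    by apply: imset_f.
  by rewrite hb in_set1 => /eqP.
set Q := (lambda ^ k)%N.
have hQ2 : (2 <= Q)%N.
  rewrite /Q; apply (leq_trans hl); rewrite -{1}(expn1 lambda) leq_pexp2l //.
  by apply (leq_trans (isT : (0 < 2)%N) hl).
have hQ : (0 < Q)%N by apply (leq_trans (isT : (0 < 2)%N) hQ2).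
pose F a r := nth a0 (subst_iter theta k a) r.
have hF m r : (r < Q)%N -> u (Q * m + r)%N = F (u m) r.
  by move=> hr; apply: fix_iter.
have claim : forall eps, (0 < eps) -> exists K, (1 <= K)%N /\
    weyl_lt u (fun n => u (n %% Q ^ K)%N) eps.
  move=> eps he.
  have hx : (Rabs (INR (Q - 1) / INR Q) < 1).
    have hQr : (0 < INR Q) by apply: lt_0_INR; apply/ltP.
    have h1 : INR (Q - 1) = (INR Q - 1).
      rewrite minus_INR //; apply/leP; exact: hQ.
    rewrite h1 Rabs_right.
      apply: (Rmult_lt_reg_r (INR Q)) => //. rewrite /Rdiv Rmult_assoc Rinv_l; lra.
    apply: Rle_ge; apply: Rle_mult_inv_pos; last by [].
    have : (1 <= INR Q) by rewrite -[1]/(INR 1); apply: le_INR; apply/leP.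
    lra.
  have [K0 hK0] := pow_lt_1_zero _ hx (eps / 2) ltac:(lra).
  set K := K0.+1.
  set C := ((Q - 1) ^ K)%N.
  set P := (Q ^ K)%N.
  have hP : (0 < P)%N by rewrite expn_gt0 hQ.
  have hrho : (INR C / INR P < eps / 2).
    have := hK0 K (le_S _ _ (le_n K0)).
    rewrite /C /P !INR_expn Rpow_mult_distr pow_inv.
    move/(Rle_lt_trans _ _ _ (Rle_abs _)).
    by [].
  have hC : 0 <= INR C by apply: pos_INR.
  have he2 : 0 < eps / 2 / (INR C + 1).
    apply: Rmult_lt_0_compat; first lra. apply: Rinv_0_lt_compat; lra.
  have [N0 [hN0 hN0p]] := archimed_cor1 _ he2.
  have hN0r : 0 < INR N0 by apply: lt_0_INR; exact: hN0p.
  exists K; split; first by [].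
  apply: (@weyl_bound A u _ (INR C / INR P + INR C / INR N0) eps N0).
    move=> l N hN.
    have hcnt : (mismatches u (fun n => u (n %% Q ^ K)%N) l N.+1 <= (N.+1 %/ P + 1) * C)%N.
      apply: (leq_trans (sub_count (a2 := bad Q j K) _ _)).
        move=> i /= hneq; apply/negPn/negP => hbi; move: hneq.
        rewrite (@good_eq _ u Q j F b hQ hF hb' K i (i %% Q ^ K)%N hbi) ?eqxx //; exact: (esym (modn_mod _ _)).
      rewrite /C -(@cnt_bad Q j hQ hj K).
      apply: cnt_le => //; exact: bad_per.
    apply: (Rle_trans _ _ _ (@ratio_le _ _ _ _ (ltn0Sn N) hP hcnt)).
    apply: Rplus_le_compat_l.
    apply: Rmult_le_compat_l => //.
    apply: Rinv_le_contravar => //; apply: le_INR; apply/leP; exact: leqW.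
  have h1 : INR C / INR N0 <= INR C * (eps / 2 / (INR C + 1)).
    apply: Rmult_le_compat_l => //; lra.
  have h2 : INR C * (eps / 2 / (INR C + 1)) < eps / 2.
    set z := eps / 2 / (INR C + 1).
    have hz : eps / 2 = z * (INR C + 1) by rewrite /z; field; lra.
    rewrite hz; nra.
  lra.
split.
- move=> eps he; have [K [hK hw]] := claim eps he.
  exists (Q ^ K)%N, (fun n => u (n %% Q ^ K)%N); split; first by rewrite expn_gt0 hQ.
  split => //; move=> n /=; by rewrite modnDr.
- move=> eps he; have [K [hK hw]] := claim eps he.
  exists (k * K)%N, (fun n => u (n %% Q ^ K)%N); split; first by rewrite muln_gt0 hk.
  split => //; move=> n /=; by rewrite /Q -expnM modnDr.
Qed.
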